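(* Consider a symmetric two-player Prisoner's Dilemma with payoffs $(a,a)$ for $(C,C)$, $(b,c)$ for $(C,D)$, $(c,b)$ for $(D,C)$ and $(d,d)$ for $(D,D)$, where $c>a>d>b$, and set $\Delta C=c-a>0$ and $\Delta D=d-b>0$. Let both players' tolerances be drawn from the same distribution on $[0,\infty)$ with continuous cumulative distribution function $F$. Then: (i) $\alpha\in[0,1]$ is a symmetric particularly cooperative equilibrium if and only if $1-\alpha=F(\alpha\,\Delta C+(1-\alpha)\,\Delta D)$, and at least one such $\alpha$ exists; (ii) $\alpha=0$ is a symmetric particularly cooperative equilibrium if and only if $F(\Delta D)=1$; (iii) if $\Delta C>\Delta D$, there is exactly one symmetric particularly cooperative equilibrium.
   Context: If a player believes the other player plays $C$ with probability $\alpha$, the gain from defecting rather than cooperating is $\alpha\,\Delta C+(1-\alpha)\,\Delta D$, so a player with tolerance $t$ finds $C$ to be a $t$-best response (i.e., $u(D)\le u(C)+t$) iff $t\ge \alpha\,\Delta C+(1-\alpha)\,\Delta D$. A symmetric particularly cooperative equilibrium is a number $\alpha\in[0,1]$ such that, when each player believes the other cooperates with probability $\alpha$, every tolerance type for which $C$ is a $t$-best response plays $C$, every other type plays $D$ (the only $t$-best response for it), and the resulting overall probability that a player cooperates equals $\alpha$; that is, $\alpha=\Pr_F\big[T\ge \alpha\,\Delta C+(1-\alpha)\,\Delta D\big]$ where $T$ is a tolerance drawn from $F$. *)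

(* Defs.v *)
From Stdlib Require Import Reals Lra.
Open Scope R_scope.

Definition is_tolerance_cdf (F : R -> R) : Prop :=
  (forall x y, x <= y -> F x <= F y) /\
  (forall x, forall eps, 0 < eps -> exists delta, 0 < delta /\
      forall y, x <= y < x + delta -> Rabs (F y - F x) < eps) /\
  (forall x, x < 0 -> F x = 0) /\
  (forall eps, 0 < eps -> exists M, forall x, M <= x -> Rabs (F x - 1) < eps).

Definition left_limit (F : R -> R) (x L : R) : Prop :=
  forall eps, 0 < eps -> exists delta, 0 < delta /\
    forall y, x - delta < y < x -> Rabs (F y - L) < eps.

(* Pr_F[T >= x] = 1 - F(x-), for T distributed with CDF F. *)
Definition prob_ge (F : R -> R) (x p : R) : Prop :=
  exists L, left_limit F x L /\ p = 1 - L.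

Definition spce (dC dD : R) (F : R -> R) (alpha : R) : Prop :=
  0 <= alpha <= 1 /\ prob_ge F (alpha * dC + (1 - alpha) * dD) alpha.

(* Main.v *)
Require Import Defs.
From Stdlib Require Import Reals Lra.
Open Scope R_scope.

Lemma cont_eps (F : R -> R) x : continuity F -> forall eps, 0 < eps ->
  exists d, 0 < d /\ forall y, Rabs (y - x) < d -> Rabs (F y - F x) < eps.
Proof.
  intros HF eps He.
  destruct (HF x eps He) as [d [Hd H]].
  exists d; split; auto. intros y Hy.
  destruct (Req_dec y x) as [->|Hne].
  - rewrite Rminus_diag, Rabs_R0; auto.
  - apply (H y). split; [split; [exact I|auto]|exact Hy].
Qed.

Lemma prob_ge_iff (F : R -> R) x p : continuity F ->
  (prob_ge F x p <-> p = 1 - F x).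
Proof.
  intros HF; split.
  - intros [L [HL ->]].
    destruct (Req_dec L (F x)) as [->|Hne]; [reflexivity|exfalso].
    set (e := Rabs (L - F x) / 2).
    assert (He : 0 < e) by (unfold e; assert (0 < Rabs (L - F x)) by (apply Rabs_pos_lt; lra); lra).
    destruct (HL e He) as [d1 [Hd1 H1]].
    destruct (cont_eps F x HF e He) as [d2 [Hd2 H2]].
    set (y := x - Rmin d1 d2 / 2).
    assert (Hm1 := Rmin_l d1 d2). assert (Hm2 := Rmin_r d1 d2).
    assert (Hm0 : 0 < Rmin d1 d2) by (apply Rmin_pos; auto).
    specialize (H1 y). specialize (H2 y).
    assert (A : Rabs (F y - L) < e) by (apply H1; unfold y; lra).
    assert (B : Rabs (F y - F x) < e) by (apply H2; unfold y; rewrite Rabs_left; lra).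
    assert (C : Rabs (L - F x) <= Rabs (F y - L) + Rabs (F y - F x)).
    { replace (L - F x) with (-(F y - L) + (F y - F x)) by ring.
      eapply Rle_trans; [apply Rabs_triang|]. rewrite Rabs_Ropp; lra. }
    unfold e in *; lra.
  - intros ->. exists (F x); split; [|reflexivity].
    intros eps He. destruct (cont_eps F x HF eps He) as [d [Hd H]].
    exists d; split; auto. intros y Hy. apply H. rewrite Rabs_left; lra.
Qed.

Lemma F_bounds (F : R -> R) : is_tolerance_cdf F -> forall x, 0 <= F x <= 1.
Proof.
  intros [Hm [_ [H0 H1]]] x. split.
  - rewrite <- (H0 (x - Rabs x - 1)) by (pose proof (Rle_abs x); pose proof (Rabs_pos x); lra).
    apply Hm. pose proof (Rabs_pos x); lra.
  - destruct (Rle_dec (F x) 1) as [h|h]; auto. exfalso.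
    destruct (H1 (F x - 1)) as [M HM]; [lra|].
    specialize (HM (Rmax M x) (Rmax_l M x)).
    assert (F x <= F (Rmax M x)) by (apply Hm; apply Rmax_r).
    rewrite Rabs_right in HM; lra.
Qed.

Theorem theorem4p1 (a b c d : R) (F : R -> R) :
  b < d -> d < a -> a < c ->
  is_tolerance_cdf F -> continuity F ->
  (forall alpha, 0 <= alpha <= 1 ->
     (spce (c - a) (d - b) F alpha <->
      1 - alpha = F (alpha * (c - a) + (1 - alpha) * (d - b)))) /\
  (exists alpha, spce (c - a) (d - b) F alpha) /\
  (spce (c - a) (d - b) F 0 <-> F (d - b) = 1) /\
  (c - a > d - b -> exists! alpha, spce (c - a) (d - b) F alpha).
Proof.
  intros Hbd Hda Hac HT HF.
  assert (Hi : forall alpha, 0 <= alpha <= 1 ->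
     (spce (c - a) (d - b) F alpha <->
      1 - alpha = F (alpha * (c - a) + (1 - alpha) * (d - b)))).
  { intros al Hal. unfold spce. rewrite prob_ge_iff by auto. split.
    - intros [_ H]; lra.
    - intros H; split; auto; lra. }
  assert (Hs : forall al, spce (c - a) (d - b) F al <->
     0 <= al <= 1 /\ 1 - al = F (al * (c - a) + (1 - al) * (d - b))).
  { intros al; split.
    - intros H. assert (Hal : 0 <= al <= 1) by apply H.
      split; auto. apply Hi; auto.
    - intros [Hal H]; apply Hi; auto. }
  assert (Hex : exists alpha, spce (c - a) (d - b) F alpha).
  { set (h := fun al => 1 - al - F (al * (c - a) + (1 - al) * (d - b))).
    assert (Hh : continuity h).
    { unfold h. apply continuity_minus.
      - apply continuity_minus; [apply continuity_const; intros ? ?; reflexivity|apply derivable_continuous, derivable_id].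
      - apply (continuity_comp (fun al => al * (c - a) + (1 - al) * (d - b)) F); auto.
        apply continuity_plus.
        + apply continuity_mult; [apply derivable_continuous, derivable_id|apply continuity_const; intros ? ?; reflexivity].
        + apply continuity_mult; [|apply continuity_const; intros ? ?; reflexivity].
          apply continuity_minus; [apply continuity_const; intros ? ?; reflexivity|apply derivable_continuous, derivable_id]. }
    assert (H01 : 0 <= 1) by lra.
    assert (Hp : h 0 * h 1 <= 0).
    { unfold h. pose proof (F_bounds F HT (0 * (c - a) + (1 - 0) * (d - b))).
      pose proof (F_bounds F HT (1 * (c - a) + (1 - 1) * (d - b))).
      assert (0 <= 1 - 0 - F (0 * (c - a) + (1 - 0) * (d - b))) by lra.
      assert (1 - 1 - F (1 * (c - a) + (1 - 1) * (d - b)) <= 0) by lra.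
      nra. }
    destruct (IVT_cor h 0 1 Hh H01 Hp) as [z [Hz Hz0]].
    exists z. apply Hs. split; auto. unfold h in Hz0; lra. }
  split; [exact Hi|]. split; [exact Hex|split].
  - rewrite Hs. replace (0 * (c - a) + (1 - 0) * (d - b)) with (d - b) by ring.
    split; [intros [_ H]; lra|intros H; split; lra].
  - intros Hgt.
    destruct HT as [Hm _].
    assert (Huniq : forall x y, spce (c - a) (d - b) F x -> spce (c - a) (d - b) F y -> x < y -> False).
    { intros x y Hx Hy Hxy. apply Hs in Hx. apply Hs in Hy.
      destruct Hx as [_ Hx]; destruct Hy as [_ Hy].
      assert (F (x * (c - a) + (1 - x) * (d - b)) <= F (y * (c - a) + (1 - y) * (d - b))).
      { apply Hm. nra. }
      lra. }
    destruct Hex as [z Hz]. exists z. split; auto.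
    intros y Hy. destruct (Rtotal_order z y) as [H|[H|H]]; [|exact H|].
    + exfalso; exact (Huniq z y Hz Hy H).
    + exfalso; exact (Huniq y z Hy Hz H).
Qed.
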